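(* Let $e_X:P\to X$ be a meet-extension with $X$ a complete lattice, let $Q$ be a complete lattice, and let $f:P\to Q$ be an order-preserving map. Then $f$ is an $X$-morphism if and only if $f$ is $e_X$-continuous.
   Context: For $q$ in a poset, $q^\uparrow=\{q'\ge q\}$; for $S\subseteq P$, $S^\uparrow=\{p\in P:p\ge s\text{ for some }s\in S\}$; $e^{-1}(Z)=\{p:e(p)\in Z\}$. A meet-extension is an order-embedding $e:P\to X$ with $x=\bigwedge e[e^{-1}(x^\uparrow)]$ for all $x\in X$. An order-preserving $f:P\to Q$ is an $X$-morphism if for every $q\in Q$ there is $x\in X$ with $f^{-1}(q^\uparrow)=e_X^{-1}(x^\uparrow)$. For a cardinal $\alpha$, $f$ is $(\alpha,e_X)$-continuous if for all $q\in Q$ and all $S\subseteq f^{-1}(q^\uparrow)$ with $|S|<\alpha$ there are $q_S\in Q$ and $x_S\in X$ with (1) $\bigwedge f[S]=q_S=\bigwedge f[e_X^{-1}(x_S^\uparrow)]$ (both meets existing in $Q$) and (2) $S^\uparrow\subseteq e_X^{-1}(x_S^\uparrow)$. $f$ is $e_X$-continuous if it is $(\alpha,e_X)$-continuous for every cardinal $\alpha$. *)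

(* Defs.v *)
From mathcomp Require Import all_boot all_order.
Set Implicit Arguments. Unset Strict Implicit. Unset Printing Implicit Defensive.
Import Order.Theory.
Local Open Scope order_scope.

Definition is_glb {d} {T : porderType d} (S : T -> Prop) (m : T) : Prop :=
  (forall s, S s -> m <= s) /\ (forall l, (forall s, S s -> l <= s) -> l <= m).

Definition complete_lattice {d} (T : porderType d) : Prop :=
  forall S : T -> Prop, exists m, is_glb S m.

Definition order_preserving {d1 d2} {A : porderType d1} {B : porderType d2}
  (f : A -> B) : Prop := forall x y, x <= y -> f x <= f y.

Definition order_embedding {d1 d2} {A : porderType d1} {B : porderType d2}
  (f : A -> B) : Prop := forall x y, (f x <= f y) <-> (x <= y).

Definition image_of {A B : Type} (f : A -> B) (S : A -> Prop) : B -> Prop :=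
  fun b => exists a, S a /\ b = f a.

Definition upset {d} {T : porderType d} (q : T) : T -> Prop := fun y => q <= y.

Definition upclosure {d} {T : porderType d} (S : T -> Prop) : T -> Prop :=
  fun p => exists s, S s /\ s <= p.

Definition preimage {A B : Type} (e : A -> B) (Z : B -> Prop) : A -> Prop :=
  fun p => Z (e p).

Definition meet_extension {d1 d2} {P : porderType d1} {X : porderType d2}
  (e : P -> X) : Prop :=
  order_embedding e /\
  forall x : X, is_glb (image_of e (preimage e (upset x))) x.

Definition X_morphism {d1 d2 d3} {P : porderType d1} {X : porderType d2}
  {Q : porderType d3} (e : P -> X) (f : P -> Q) : Prop :=
  forall q : Q, exists x : X,
    forall p, preimage f (upset q) p <-> preimage e (upset x) p.

(* |S| < alpha, with the cardinal alpha represented by (the cardinality of)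
   a type A: S injects into A but A does not inject into S. *)
Definition card_lt {T : Type} (S : T -> Prop) (A : Type) : Prop :=
  (exists g : {t : T | S t} -> A, injective g) /\
  ~ (exists h : A -> {t : T | S t}, injective h).

Definition alpha_continuous {d1 d2 d3} (A : Type) {P : porderType d1}
  {X : porderType d2} {Q : porderType d3} (e : P -> X) (f : P -> Q) : Prop :=
  forall (q : Q) (S : P -> Prop),
    (forall s, S s -> preimage f (upset q) s) ->
    card_lt S A ->
    exists (qS : Q) (xS : X),
      is_glb (image_of f S) qS /\
      is_glb (image_of f (preimage e (upset xS))) qS /\
      (forall p, upclosure S p -> preimage e (upset xS) p).

Definition e_continuous {d1 d2 d3} {P : porderType d1}
  {X : porderType d2} {Q : porderType d3} (e : P -> X) (f : P -> Q) : Prop :=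
  forall A : Type, alpha_continuous A e f.

(* Main.v *)
Require Import Defs.
From mathcomp Require Import all_boot all_order.
Import Order.Theory.
Local Open Scope order_scope.

Lemma cantor_card {T : Type} (S : T -> Prop) :
  card_lt S ({t : T | S t} -> Prop).
Proof.
split.
- exists (fun s => fun t => t = s).
  move=> s s' H.
  have E := f_equal (fun g => g s) H; simpl in E.
  have : s = s' by rewrite -E.
  by [].
- move=> [h hinj].
  pose D := fun t => exists Y, h Y = t /\ ~ Y t.
  have nD : ~ D (h D).
    move=> HD; case: (HD) => [Y [HY nY]]. have E := hinj _ _ HY. subst Y.
    exact: nY HD.
  apply: (nD). by exists D; split.
Qed.

Theorem proposition7p2 (d1 d2 d3 : Order.disp_t)
  (P : porderType d1) (X : porderType d2) (Q : porderType d3)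
  (e : P -> X) (f : P -> Q) :
  meet_extension e -> complete_lattice X ->
  complete_lattice Q -> order_preserving f ->
  (X_morphism e f <-> e_continuous e f).
Proof.
move=> _ _ cQ fmon; split.
- move=> Xm A q S _ _.
  have [qS [lb gr]] := cQ (image_of f S).
  have [x Hx] := Xm qS.
  exists qS, x.
  have sub : forall p, upclosure S p -> preimage e (upset x) p.
    move=> p [s [Ss sp]]. apply/Hx. rewrite /preimage /upset.
    apply: le_trans (lb _ _) (fmon _ _ sp). by exists s.
  split; first by split.
  split; last exact: sub.
  split.
  + move=> y [p [Hp ->]]. by have := proj2 (Hx p) Hp.
  + move=> l Hl. apply: gr => y [s [Ss ->]]. apply: Hl. exists s; split => //.
    apply: sub. by exists s.
- move=> Ec q.
  have [qS [xS [[lb gr] [[lb2 gr2] sub]]]] :=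
    Ec _ q (preimage f (upset q)) (fun s h => h) (cantor_card _).
  exists xS => p; split.
  + move=> Hp. apply: sub. by exists p.
  + move=> Hp. rewrite /preimage /upset.
    apply: le_trans (lb2 _ _); last by exists p.
    apply: gr => y [s [Ss ->]]. exact: Ss.
Qed.
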